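(* Let $N$ be an orchard network on $X\subseteq[n]$ and let $u,v\in V_T(N)$. If $\mu(u)=\mu(v)$, then $u=v$. Consequently, the extended $\mu$-representation $\boldsymbol\mu(N)$ of an orchard network has no repeated elements, i.e. it is a set.
   Context: A (binary) phylogenetic network on a finite set $X\subseteq[n]=\{1,\dots,n\}$ is a directed acyclic graph $N=(V,A)$ without parallel arcs in which every node is exactly one of: the root (indegree 0, outdegree 1; there is exactly one), a leaf (indegree 1, outdegree 0), a tree node (indegree 1, outdegree 2), or a reticulation (indegree 2, outdegree 1); the leaves are identified with the elements of $X$. $V_T(N)$ denotes the set of leaves and tree nodes, $V_H(N)$ the set of reticulations. $m(u,v)$ is the number of directed paths from $u$ to $v$ (trivial paths allowed). Extended $\mu$-vectors: $\mu_i(u)=m(u,i)$ for $i\in[n]$ (0 if $i\notin X$), $\mu_0(u)=\sum_{h\in V_H(N)} m(u,h)$, $\mu(u)=(\mu_0(u),\dots,\mu_n(u))$; $\boldsymbol\mu(N)$ is the multiset $\{\mu(u)\mid u\in V_T(N)\}$. For distinct leaves $i,j$ with parents $p_i,p_j$: $(i,j)$ is a cherry of $N$ if $p_i=p_j$; a reticulated-cherry of $N$ if $p_i$ is a reticulation, $p_j$ is a tree node and $p_j$ is a parent of $p_i$; reducible if either. Suppressing a node with indegree 1 and outdegree 1 means deleting it and its two arcs and adding an arc from its parent to its child. The reduction $N^{(i,j)}$: if $(i,j)$ is a cherry, delete leaf $i$ and its incoming arc, then suppress $p_i$; if a reticulated-cherry, delete the arc $p_jp_i$ and suppress $p_i$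 and $p_j$. A sequence $S=s_1\cdots s_k$ of pairs is reducible in $N$ if $s_1$ is reducible in $N$ and each $s_t$ is reducible in the network obtained from $N$ by successively reducing $s_1,\dots,s_{t-1}$; $N^S$ denotes the final network; $S$ is complete if $N^S$ is the network $I_x$ consisting of a root joined by an arc to a single leaf $x$. $N$ is an orchard network if it has a complete reducible sequence. *)

(* Defs.v *)
From mathcomp Require Import all_boot.
Set Implicit Arguments. Unset Strict Implicit. Unset Printing Implicit Defensive.

(* A (candidate) network lives inside an ambient finite type V of node names:
   its node set is [nodes], its arcs are given by the relation [arc] (so there
   are no parallel arcs), and [lab] labels nodes by natural numbers (only the
   labels of leaves are meaningful).  Reductions only delete nodes/arcs and add
   arcs between existing nodes, so they stay within the same ambient type. *)
Record network (V : finType) := Network {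
  nodes : {set V};
  arc : rel V;
  lab : V -> nat }.

Section Net.
Variables (V : finType) (N : network V).

Definition indeg (x : V) : nat := #|[set y in nodes N | arc N y x]|.
Definition outdeg (x : V) : nat := #|[set y in nodes N | arc N x y]|.

Definition is_root (x : V) := (x \in nodes N) && (indeg x == 0) && (outdeg x == 1).
Definition is_leaf (x : V) := (x \in nodes N) && (indeg x == 1) && (outdeg x == 0).
Definition is_tree (x : V) := (x \in nodes N) && (indeg x == 1) && (outdeg x == 2).
Definition is_ret  (x : V) := (x \in nodes N) && (indeg x == 2) && (outdeg x == 1).

Definition VT : {set V} := [set x | is_leaf x || is_tree x].

(* binary phylogenetic network on some X subset of [n] = {1..n};
   X is the set of leaf labels *)
Definition is_network (n : nat) : Prop :=
  [/\ (forall x y, arc N x y -> (x \in nodes N) && (y \in nodes N)),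
      (forall x y, arc N x y -> ~~ connect (arc N) y x) &
      (forall x, x \in nodes N ->
         [|| is_root x, is_leaf x, is_tree x | is_ret x])] /\
  [/\ (exists r, is_root r /\ (forall x, is_root x -> x = r)),
      (forall x, is_leaf x -> 1 <= lab N x <= n) &
      (forall x y, is_leaf x -> is_leaf y -> lab N x = lab N y -> x = y)].

(* m(u,v): number of directed paths from u to v (trivial path allowed).
   A path with k arcs is a k-tuple of successive nodes; in a DAG on at most
   #|V| nodes every path has fewer than #|V| arcs. *)
Definition npaths (u v : V) : nat :=
  \sum_(k < #|V|) #|[set t : k.-tuple V | path (arc N) u t && (last u t == v)]|.

Definition mu (n : nat) (u : V) : {ffun 'I_n.+1 -> nat} :=
  [ffun k : 'I_n.+1 =>
     if val k == 0 then \sum_(h in nodes N | is_ret h) npaths u h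
     else \sum_(l in nodes N | is_leaf l && (lab N l == val k)) npaths u l].

End Net.

Definition del_arc_nodes (V : finType) (N : network V) (a b : V) (adds : rel V) : network V :=
  Network (nodes N :\ a :\ b)
          (fun x y => (arc N x y && [&& x != a, x != b, y != a & y != b]) || adds x y)
          (lab N).

Definition reduces (V : finType) (N : network V) (ij : nat * nat) (N' : network V) : Prop :=
  exists li lj pi pj : V,
    [/\ is_leaf N li, is_leaf N lj & li != lj] /\
    [/\ lab N li = ij.1, lab N lj = ij.2, arc N pi li & arc N pj lj] /\
    ( (* cherry: delete leaf i and its arc, suppress p_i (parent g, child lj) *)
      (pi = pj /\ exists g, arc N g pi /\
          N' = del_arc_nodes N li pi (fun x y => (x == g) && (y == lj)))
    \/
      (* reticulated cherry: delete arc pj pi, suppress pi (other parent q,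
         child li) and pj (parent g, child lj) *)
      [/\ is_ret N pi, is_tree N pj, arc N pj pi &
          exists q g, [/\ arc N q pi, q != pj, arc N g pj &
            N' = del_arc_nodes N pi pj
                   (fun x y => ((x == q) && (y == li)) || ((x == g) && (y == lj)))]]).

Fixpoint reduce_seq (V : finType) (N : network V) (S : seq (nat * nat)) (N' : network V)
  : Prop :=
  match S with
  | [::] => N' = N
  | s :: S' => exists N1, reduces N s N1 /\ reduce_seq N1 S' N'
  end.

Definition is_trivial (V : finType) (N : network V) : Prop :=
  exists r l : V, [/\ r != l, nodes N = [set r; l], arc N r l &
                      forall a b, arc N a b -> a = r /\ b = l].

Definition orchard (V : finType) (N : network V) : Prop :=
  exists (S : seq (nat * nat)) (N' : network V), reduce_seq N S N' /\ is_trivial N'.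

(* Main.v *)
Require Import Defs.
From mathcomp Require Import all_boot.
Set Implicit Arguments. Unset Strict Implicit. Unset Printing Implicit Defensive.
Local Notation arc := Defs.arc (only parsing).

Section Paths.
Variables (V : finType) (N : network V).
Hypothesis acyc : forall x y, arc N x y -> ~~ connect (arc N) y x.

Definition pk (u v : V) (k : nat) : nat :=
  \sum_(t : k.-tuple V) ((path (arc N) u t && (last u t == v)) : nat).

Lemma card_sumb (T : finType) (P : pred T) : #|[set x | P x]| = \sum_x (P x : nat).
Proof. by rewrite -sum1dep_card big_mkcond; apply: eq_bigr => x _; case: (P x). Qed.

Lemma npathsE u v : npaths N u v = \sum_(k < #|V|) pk u v k.
Proof. by apply: eq_bigr => k _; rewrite card_sumb. Qed.

Lemma pk0 u v : pk u v 0 = (u == v).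
Proof.
rewrite /pk (big_pred1 [tuple]) //= => t; apply/esym/eqP; exact: tuple0.
Qed.

Lemma pkS u v k : pk u v k.+1 = \sum_(c | arc N u c) pk c v k.
Proof.
rewrite /pk (reindex (fun p : V * k.-tuple V => [tuple of p.1 :: p.2])) /=; last first.
  exists (fun t : k.+1.-tuple V => (thead t, [tuple of behead t])).
    move=> [x t] _ /=.
    by rewrite theadE; congr pair; apply: val_inj.
  move=> t _ /=; by rewrite [RHS]tuple_eta.
rewrite -(pair_big predT predT (fun x (t : k.-tuple V) =>
   ((arc N u x && path (arc N) x t && (last x t == v)) : nat))) /=.
rewrite [RHS]big_mkcond /=; apply: eq_bigr => c _.
case: (arc N u c) => //=; by rewrite big1.
Qed.

Lemma path_uniq u t : path (arc N) u t -> uniq (u :: t).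
Proof.
elim: t u => [|y t IH] u // /andP[Huy Hp].
rewrite cons_uniq (IH _ Hp) andbT; apply/negP => Hu.
have := path_connect Hp Hu; apply/negP; exact: acyc.
Qed.

Lemma path_size u t : path (arc N) u t -> size t < #|V|.
Proof.
move/path_uniq/card_uniqP => H; have := max_card (mem (u :: t)).
by rewrite H.
Qed.

Lemma npaths_rec u v :
  npaths N u v = (u == v) + \sum_(c | arc N u c) npaths N c v.
Proof.
rewrite npathsE.
have K0 : 0 < #|V| by apply/card_gt0P; exists u.
move: K0; case E: #|V| => [//|K] _.
rewrite big_ord_recl pk0; congr addn.
have -> : \sum_(i < K) pk u v (lift ord0 i) = \sum_(i < K) pk u v i.+1.
  by apply: eq_bigr => i _; rewrite /= /bump add1n.
rewrite (eq_bigr (fun k : 'I_K => \sum_(c | arc N u c) pk c v k)); last by move=> k _; rewrite pkS.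
rewrite exchange_big /=; apply: eq_bigr => c Huc.
rewrite npathsE E big_ord_recr /=.
have -> : pk c v K = 0.
  apply: big1 => t _; case Hp: (path _ _ _) => //=.
  have : path (arc N) u (c :: t) by rewrite /= Huc.
  by move/path_size; rewrite E /= size_tuple ltnn.
by rewrite addn0.
Qed.

Lemma npaths_connect u v : (0 < npaths N u v) = connect (arc N) u v.
Proof.
apply/idP/idP.
  apply: contraLR => Hc.
  rewrite -leqNgt leqn0 npathsE sum_nat_eq0; apply/forallP => k; apply/implyP => _.
  rewrite /pk sum_nat_eq0; apply/forallP => t; apply/implyP=> _.
  case H: (path _ _ _ && _) => //; case/andP: H => Hp /eqP Hl.
  by case/negP: Hc; apply/connectP; exists t.
case/connectP => p Hp ->.
have Hs := path_size Hp.
rewrite npathsE (bigD1 (Ordinal Hs)) //= ltn_addr //.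
rewrite /pk (bigD1 (in_tuple p)) //= Hp eqxx /=.
by rewrite add1n.
Qed.

Lemma rec_uniq (D : {set V}) (b f g : V -> nat) :
  (forall x y, x \in D -> arc N x y -> y \in D) ->
  (forall w, w \in D -> f w = b w + \sum_(c | arc N w c) f c) ->
  (forall w, w \in D -> g w = b w + \sum_(c | arc N w c) g c) ->
  forall w, w \in D -> f w = g w.
Proof.
move=> cl Hf Hg w.
elim: {w}_.+1 {-2}w (ltnSn #|[set y | connect (arc N) w y]|) => // m IH w Hm Hw.
rewrite Hf // Hg //; congr addn; apply: eq_bigr => c Hc; apply: IH; last exact: cl Hw Hc.
rewrite -ltnS; apply: leq_trans Hm; rewrite ltnS; apply: proper_card; apply/properP; split.
  apply/subsetP => y; rewrite !inE => Hy; apply: connect_trans Hy; exact: connect1.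
by exists w; rewrite !inE ?connect0 //; apply: acyc.
Qed.

Lemma sum_eqb (P : pred V) w : \sum_(p | P p) ((w == p) : nat) = P w.
Proof.
case Pw: (P w).
  rewrite (bigD1 w) // eqxx big1 // => p /andP[_ Hp]; by rewrite eq_sym (negPf Hp).
by apply: big1 => p Pp; case: eqP => // E; rewrite E Pp in Pw.
Qed.

Lemma sum_eqb' (P : pred V) w : \sum_(p | P p) ((p == w) : nat) = P w.
Proof. by rewrite -sum_eqb; apply: eq_bigr => p _; rewrite eq_sym. Qed.

Lemma npaths_rrec w x :
  npaths N w x = (w == x) + \sum_(p | arc N p x) npaths N w p.
Proof.
pose f w := (w == x) + \sum_(p | arc N p x) npaths N w p.
apply: (@rec_uniq setT (fun w => (w == x) : nat) (npaths N ^~ x) f) => //.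
  by move=> y _; rewrite npaths_rec.
move=> y _; rewrite /f.
congr addn.
rewrite (eq_bigr (fun p => (y == p) + \sum_(c | arc N y c) npaths N c p)); last first.
  by move=> p _; rewrite npaths_rec.
rewrite !big_split /= sum_eqb sum_eqb' exchange_big //.
Qed.
End Paths.

Definition Inv (n : nat) (V : finType) (N : network V) : Prop :=
 [/\ forall x y, arc N x y -> (x \in nodes N) && (y \in nodes N),
     forall x y, arc N x y -> ~~ connect (arc N) y x,
     forall x, x \in nodes N -> [|| is_root N x, is_leaf N x, is_tree N x | is_ret N x],
     forall x, is_leaf N x -> 0 < lab N x <= n &
     forall x y, is_leaf N x -> is_leaf N y -> lab N x = lab N y -> x = y].

Lemma card1_eq (T : finType) (A : {set T}) a b : #|A| = 1 -> a \in A -> b \in A -> a = b.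
Proof. by move/eqP/cards1P=> [z ->]; rewrite !inE => /eqP -> /eqP ->. Qed.

Lemma card2_eq (T : finType) (A : {set T}) a b c : #|A| = 2 -> a \in A -> b \in A ->
  a != b -> c \in A -> c = a \/ c = b.
Proof.
move=> H2 Ha Hb Hab Hc; case: (eqVneq c a) => [->|Hca]; first by left.
right; apply: (@card1_eq _ (A :\ a)); rewrite ?inE ?Hca ?Hc // ?(eq_sym b) ?Hab ?Hb //.
by move: H2; rewrite (cardsD1 a) Ha => -[].
Qed.

Section Struct.
Variables (n : nat) (V : finType) (N : network V).
Hypothesis HN : Inv n N.

Lemma arcN x y : arc N x y -> (x \in nodes N) /\ (y \in nodes N).
Proof. by move=> Hxy; case: HN => H _ _ _ _; apply/andP/H. Qed.

Lemma acycN x y : arc N x y -> ~~ connect (arc N) y x.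
Proof. by case: HN => _ H _ _ _; apply: H. Qed.

Lemma inE_in x y : (y \in [set y in nodes N | arc N y x]) = arc N y x.
Proof. by rewrite inE; apply/andP/idP => [[]//|H]; split => //; by case: (arcN H). Qed.

Lemma inE_out x y : (y \in [set y in nodes N | arc N x y]) = arc N x y.
Proof. by rewrite inE; apply/andP/idP => [[]//|H]; split => //; by case: (arcN H). Qed.

Lemma leaf_parent x p y : is_leaf N x -> arc N p x -> arc N y x -> y = p.
Proof.
case/andP=> /andP[_ /eqP H] _ Hp Hy.
by apply: (card1_eq H); rewrite inE_in.
Qed.

Lemma leaf_nochild x y : is_leaf N x -> ~~ arc N x y.
Proof.
case/andP=> _ /eqP H; apply/negP => Hxy.
have : y \in [set y in nodes N | arc N x y] by rewrite inE_out.
by move/cards0_eq: H => ->; rewrite inE.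
Qed.

Lemma tree_parent x p y : is_tree N x -> arc N p x -> arc N y x -> y = p.
Proof.
case/andP=> /andP[_ /eqP H] _ Hp Hy.
by apply: (card1_eq H); rewrite inE_in.
Qed.

Lemma tree_child x a b c : is_tree N x -> arc N x a -> arc N x b -> a != b ->
  arc N x c -> c = a \/ c = b.
Proof.
case/andP=> _ /eqP H Ha Hb Hab Hc.
by apply: (card2_eq H); rewrite ?inE_out.
Qed.

Lemma ret_parent x a b c : is_ret N x -> arc N a x -> arc N b x -> a != b ->
  arc N c x -> c = a \/ c = b.
Proof.
case/andP=> /andP[_ /eqP H] _ Ha Hb Hab Hc.
by apply: (card2_eq H); rewrite ?inE_in.
Qed.

Lemma ret_child x a b : is_ret N x -> arc N x a -> arc N x b -> b = a.
Proof.
case/andP=> _ /eqP H Ha Hb.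
by apply: (card1_eq H); rewrite inE_out.
Qed.

Lemma tree_has2 x : is_tree N x -> exists a b, [/\ a != b, arc N x a & arc N x b].
Proof.
case/andP=> _ /eqP H; have /cards2P [a [b [Hab E]]] : #|[set y in nodes N | arc N x y]| == 2 by rewrite -/(outdeg N x) H.
exists a, b; split => //; rewrite -inE_out E !inE eqxx ?orbT //.
Qed.

Lemma two_children_tree x a b : arc N x a -> arc N x b -> a != b -> is_tree N x.
Proof.
move=> Ha Hb Hab.
have Hx : x \in nodes N by case: (arcN Ha).
have H2 : 2 <= outdeg N x.
  have : #|[set a; b]| <= outdeg N x.
    rewrite /outdeg; apply: subset_leq_card; apply/subsetP => y.
    by rewrite inE_out !inE => /orP[] /eqP ->.
  by rewrite cards2 Hab.
case: HN => _ _ /(_ x Hx) + _ _.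
rewrite /is_root /is_leaf /is_tree /is_ret Hx /=.
by case/or4P => /andP[_ /eqP E] //; rewrite E in H2.
Qed.

Lemma reach_leaf x : x \in nodes N -> exists l, is_leaf N l /\ connect (arc N) x l.
Proof.
elim: {x}_.+1 {-2}x (ltnSn #|[set y | connect (arc N) x y]|) => // m IH x Hm Hx.
case E: (outdeg N x) => [|k].
  exists x; split; last exact: connect0.
  case: HN => _ _ /(_ x Hx) + _ _.
  rewrite /is_root /is_leaf /is_tree /is_ret Hx E /=.
  by case/or4P => // /andP[_ /eqP].
have : 0 < #|[set y in nodes N | arc N x y]| by rewrite -/(outdeg N x) E.
case/card_gt0P => y; rewrite inE_out => Hxy.
have Hy : y \in nodes N by case: (arcN Hxy).
have [|l [Hl Hyl]] := IH y _ Hy.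
  rewrite -ltnS; apply: leq_trans Hm; rewrite ltnS; apply: proper_card; apply/properP; split.
    apply/subsetP => z; rewrite !inE => Hz; apply: connect_trans Hz; exact: connect1.
  by exists x; rewrite !inE ?connect0 //; apply: acycN.
by exists l; split => //; apply: connect_trans Hyl; apply: connect1.
Qed.

Lemma sum_children x a b (F : V -> nat) : is_tree N x -> arc N x a -> arc N x b -> a != b ->
  \sum_(c | arc N x c) F c = F a + F b.
Proof.
move=> Ht Ha Hb Hab; rewrite (bigD1 a) //; congr addn; apply: big_pred1 => c /=.
apply/andP/eqP => [[Hc Hca]|->]; last by rewrite Hb eq_sym Hab.
by case: (tree_child Ht Ha Hb Hab Hc) => // E; rewrite E eqxx in Hca.
Qed.

Lemma sum_parent_leaf x p (F : V -> nat) : is_leaf N x -> arc N p x ->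
  \sum_(q | arc N q x) F q = F p.
Proof.
move=> Hl Hp; apply: big_pred1 => q /=; apply/idP/eqP => [Hq|->//].
exact: leaf_parent Hl Hp Hq.
Qed.

Lemma sum_parent_tree x p (F : V -> nat) : is_tree N x -> arc N p x ->
  \sum_(q | arc N q x) F q = F p.
Proof.
move=> Hl Hp; apply: big_pred1 => q /=; apply/idP/eqP => [Hq|->//].
exact: tree_parent Hl Hp Hq.
Qed.

Lemma sum_parents_ret x a b (F : V -> nat) : is_ret N x -> arc N a x -> arc N b x -> a != b ->
  \sum_(c | arc N c x) F c = F a + F b.
Proof.
move=> Ht Ha Hb Hab; rewrite (bigD1 a) //; congr addn; apply: big_pred1 => c /=.
apply/andP/eqP => [[Hc Hca]|->]; last by rewrite Hb eq_sym Hab.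
by case: (ret_parent Ht Ha Hb Hab Hc) => // E; rewrite E eqxx in Hca.
Qed.

Lemma sum_child_ret x a (F : V -> nat) : is_ret N x -> arc N x a ->
  \sum_(c | arc N x c) F c = F a.
Proof.
move=> Hr Ha; apply: big_pred1 => c /=; apply/idP/eqP => [Hc|->//].
exact: ret_child Hr Ha Hc.
Qed.

Lemma npaths_leaf x y : is_leaf N x -> npaths N x y = (x == y).
Proof.
move=> Hl; rewrite npaths_rec; last exact: acycN.
by rewrite big_pred0 ?addn0 // => c; apply/negbTE/leaf_nochild.
Qed.

Lemma leaf_not_tree x : is_leaf N x -> ~~ is_tree N x.
Proof. by case/andP => _ /eqP E; rewrite /is_tree E andbF. Qed.
Lemma leaf_not_ret x : is_leaf N x -> ~~ is_ret N x.
Proof. by case/andP => _ /eqP E; rewrite /is_ret E andbF. Qed.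
Lemma tree_not_ret x : is_tree N x -> ~~ is_ret N x.
Proof. by case/andP => _ /eqP E; rewrite /is_ret E andbF. Qed.

Lemma pos_connect u v : (0 < npaths N u v) = connect (arc N) u v.
Proof. by apply: npaths_connect; apply: acycN. Qed.

Lemma nrec u v : npaths N u v = (u == v) + \sum_(c | arc N u c) npaths N c v.
Proof. by apply: npaths_rec; apply: acycN. Qed.

Lemma nrrec u v : npaths N u v = (u == v) + \sum_(c | arc N c v) npaths N u c.
Proof. by apply: npaths_rrec; apply: acycN. Qed.

End Struct.

Lemma net_Inv n (V : finType) (N : network V) : is_network N n -> Inv n N.
Proof. by case=> -[H1 H2 H3] [_ H5 H6]; split. Qed.

Lemma sum_swap1 (V : finType) (P1 P2 : pred V) (F : V -> nat) a b :
  P1 a -> ~~ P2 a -> P2 b -> ~~ P1 b -> F a = F b ->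
  (forall c, c != a -> c != b -> P1 c = P2 c) ->
  \sum_(c | P1 c) F c = \sum_(c | P2 c) F c.
Proof.
move=> P1a P2a P2b P1b Fab H.
rewrite (bigD1 a) // (bigD1 b P2b) Fab; congr addn; apply: eq_bigl => c.
case: (eqVneq c a) => [->|Hca]; first by rewrite andbF (negPf P2a).
case: (eqVneq c b) => [->|Hcb]; first by rewrite andbF andbT (negPf P1b).
by rewrite !andbT H.
Qed.

Lemma sum_swap2 (V : finType) (P1 P2 : pred V) (F : V -> nat) a b a' b' :
  a != a' -> P1 a -> ~~ P2 a -> P2 b -> ~~ P1 b -> F a = F b ->
  P1 a' -> ~~ P2 a' -> P2 b' -> ~~ P1 b' -> F a' = F b' -> b != b' ->
  (forall c, c != a -> c != b -> c != a' -> c != b' -> P1 c = P2 c) ->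
  \sum_(c | P1 c) F c = \sum_(c | P2 c) F c.
Proof.
move=> Haa P1a P2a P2b P1b Fab P1a' P2a' P2b' P1b' Fab' Hbb H.
pose P c := if c == a then false else if c == b then true else P1 c.
have Hab : a != b by apply: contraNneq P1b => <-.
have Ha'b : a' != b by apply: contraNneq P1b => <-.
have Hab' : a != b' by apply: contraNneq P2a => ->.
have Ha'b' : a' != b' by apply: contraNneq P2a' => ->.
rewrite (@sum_swap1 _ P1 P F a b) //.
- apply: (@sum_swap1 _ P P2 F a' b') => //.
  + by rewrite /P (negPf Ha'b) eq_sym (negPf Haa).
  + by rewrite /P eq_sym (negPf Hab') eq_sym (negPf Hbb).
  + move=> c Hc1 Hc2; rewrite /P; case: (eqVneq c a) => [->|Hca]; first by rewrite (negPf P2a).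
    case: (eqVneq c b) => [->|Hcb] //; exact: H.
- by rewrite /P eqxx.
- by rewrite /P (eq_sym b) (negPf Hab) eqxx.
- by move=> c Hca Hcb; rewrite /P (negPf Hca) (negPf Hcb).
Qed.

Lemma sum_split (V : finType) (P : pred V) (F : V -> nat) a b : a != b ->
  \sum_(c | P c) F c = \sum_(c | P c && (c != a) && (c != b)) F c + P a * F a + P b * F b.
Proof.
move=> Hab; rewrite (bigID (fun c => (c == a) || (c == b))) /= addnC -addnA; congr addn.
  by apply: eq_bigl => c; rewrite negb_or andbA.
rewrite big_mkcond (bigD1 a) //= (bigD1 b) /=; last by rewrite eq_sym.
rewrite big1 ?addn0; last first.
  move=> c /andP[Hca Hcb]; by rewrite (negPf Hca) (negPf Hcb) andbF.
rewrite !eqxx orbT /=.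
by case: (P a); case: (P b); rewrite ?mul1n ?mul0n.
Qed.

Lemma acyc_sub (V : finType) (e e1 : rel V) :
  (forall x y, e x y -> ~~ connect e y x) ->
  (forall x y, e1 x y -> exists z, e x z /\ connect e z y) ->
  forall x y, e1 x y -> ~~ connect e1 y x.
Proof.
move=> Ha H x y Hxy; apply/negP => Hyx.
have sub : subrel e1 (connect e) by move=> u v /H [z [Huz Hzv]]; apply: connect_trans Hzv; exact: connect1.
have [z [Hxz Hzy]] := H _ _ Hxy.
have Hyx' := connect_sub sub Hyx.
by move: (Ha _ _ Hxz); rewrite (connect_trans Hzy Hyx').
Qed.

Lemma deg_in (V : finType) (N : network V) x :
  (forall y, arc N y x -> y \in nodes N) -> indeg N x = \sum_(y | arc N y x) 1.
Proof.
move=> H; rewrite sum1dep_card /indeg; apply: eq_card => y; rewrite !inE.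
by apply/andP/idP => [[]//|Hy]; rewrite H.
Qed.

Lemma deg_out (V : finType) (N : network V) x :
  (forall y, arc N x y -> y \in nodes N) -> outdeg N x = \sum_(y | arc N x y) 1.
Proof.
move=> H; rewrite sum1dep_card /outdeg; apply: eq_card => y; rewrite !inE.
by apply/andP/idP => [[]//|Hy]; rewrite H.
Qed.

Section Mu.
Variables (n : nat) (V : finType) (N : network V).
Hypothesis HN : Inv n N.

Lemma lab_lt l : is_leaf N l -> lab N l < n.+1.
Proof. by case: HN => _ _ _ H _ /H /andP[_]; rewrite ltnS. Qed.

Lemma lab_pos l : is_leaf N l -> 0 < lab N l.
Proof. by case: HN => _ _ _ H _ /H /andP[]. Qed.

Lemma mu_leaf w l : is_leaf N l ->
  mu N n w (inord (lab N l)) = npaths N w l.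
Proof.
move=> Hl; rewrite /mu ffunE.
have E : \val (inord (lab N l) : 'I_n.+1) = lab N l := inordK (lab_lt Hl).
rewrite E; case: eqP => [E0|_]; first by have := lab_pos Hl; rewrite E0.
apply: big_pred1 => h /=; apply/andP/eqP => [[Hh /andP[Hlh /eqP E2]]|->].
  by case: HN => _ _ _ _ H; apply: H.
by split; [case/andP: Hl => /andP[]| rewrite Hl eqxx].
Qed.

Lemma mu_ret w : mu N n w ord0 = \sum_(h in nodes N | is_ret N h) npaths N w h.
Proof. by rewrite /mu ffunE. Qed.

End Mu.

Module Ch.

Section Cherry.
Variables (n : nat) (V : finType) (N : network V) (li lj p g : V).
Hypotheses (HN : Inv n N) (Hli : is_leaf N li) (Hlj : is_leaf N lj) (Hij : li != lj)
  (Apl : arc N p li) (Apj : arc N p lj) (Agp : arc N g p).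
Local Notation N1 := (del_arc_nodes N li p (fun x y => (x == g) && (y == lj))).

Lemma ptree : is_tree N p. Proof. have := two_children_tree HN Apl Apj Hij. done. Qed.
Lemma par_li y : arc N y li -> y = p. Proof. by move=> H; have := leaf_parent HN Hli Apl H. Qed.
Lemma par_lj y : arc N y lj -> y = p. Proof. by move=> H; have := leaf_parent HN Hlj Apj H. Qed.
Lemma par_p y : arc N y p -> y = g. Proof. by move=> H; have := tree_parent HN ptree Agp H. Qed.
Lemma ch_p c : arc N p c -> c = li \/ c = lj. Proof. by move=> H; have := tree_child HN ptree Apl Apj Hij H. Qed.
Lemma noli y : ~~ arc N li y. Proof. have := leaf_nochild HN y Hli. done. Qed.
Lemma nolj y : ~~ arc N lj y. Proof. have := leaf_nochild HN y Hlj. done. Qed.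

Lemma pli : p != li.
Proof. by apply/eqP => E; move: (noli li); rewrite -{1}E Apl. Qed.
Lemma plj : p != lj.
Proof. by apply/eqP => E; move: (nolj lj); rewrite -{1}E Apj. Qed.
Lemma gp : g != p.
Proof. by apply/eqP => E; move: (acycN HN Agp); rewrite E connect0. Qed.
Lemma gli : g != li.
Proof. by apply/eqP => E; move: (noli p); rewrite -E Agp. Qed.
Lemma glj : g != lj.
Proof. by apply/eqP => E; move: (nolj p); rewrite -E Agp. Qed.
Lemma gN : g \in nodes N. Proof. by case: (arcN HN Agp). Qed.
Lemma ljN : lj \in nodes N. Proof. by case: (arcN HN Apj). Qed.

Lemma n1E x : (x \in nodes N1) = [&& x != p, x != li & x \in nodes N].
Proof. by rewrite /= !in_setD1. Qed.

Lemma n1N x : x \in nodes N1 -> x \in nodes N.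
Proof. by rewrite n1E => /and3P[]. Qed.

Lemma arc1N x y : arc N1 x y -> (x \in nodes N1) && (y \in nodes N1).
Proof.
rewrite /= => /orP[/andP[Hxy /and4P[H1 H2 H3 H4]]|/andP[/eqP -> /eqP ->]].
  by case: (arcN HN Hxy) => Hx Hy; rewrite !n1E H1 H2 H3 H4 Hx Hy.
by rewrite !n1E gp gli gN (eq_sym lj) plj eq_sym Hij ljN.
Qed.

Lemma acyc1 x y : arc N1 x y -> ~~ connect (arc N1) y x.
Proof.
apply: acyc_sub; first exact: acycN HN.
move=> a b; rewrite /= => /orP[/andP[Hab _]|/andP[/eqP -> /eqP ->]].
  by exists b; split => //; apply: connect0.
by exists p; split => //; apply: connect1.
Qed.

Lemma a1_in x c : x \in nodes N1 ->
  arc N1 c x = (arc N c x && (c != p)) || ((c == g) && (x == lj)).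
Proof.
rewrite n1E => /and3P[Hxp Hxl Hx] /=; rewrite Hxp Hxl.
case: (eqVneq c p) => [->|Hcp]; first by rewrite (eq_sym p g) (negPf gp) /= !andbF.
case: (eqVneq c li) => [->|Hcl]; first by rewrite (negPf (noli x)) eq_sym (negPf gli).
by rewrite !andbT.
Qed.

Lemma a1_out x c : x \in nodes N1 ->
  arc N1 x c = (arc N x c && (c != p)) || ((x == g) && (c == lj)).
Proof.
rewrite n1E => /and3P[Hxp Hxl Hx] /=; rewrite Hxp Hxl.
case: (eqVneq c p) => [->|Hcp]; first by rewrite (negPf plj) !andbF.
case: (eqVneq c li) => [->|Hcl].
  case Hxli: (arc N x li); last by rewrite (negPf Hij) andbF.
  by move: Hxp; rewrite (par_li Hxli) eqxx.
by rewrite !andbT.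
Qed.

Lemma arc1_nodes x : (forall y, arc N1 y x -> y \in nodes N1) /\ (forall y, arc N1 x y -> y \in nodes N1).
Proof. by split => y /arc1N /andP[]. Qed.

Lemma arcN_nodes x : (forall y, arc N y x -> y \in nodes N) /\ (forall y, arc N x y -> y \in nodes N).
Proof. by split => y /(arcN HN) []. Qed.

Lemma indeg1 x : x \in nodes N1 -> indeg N1 x = indeg N x.
Proof.
move=> Hx; rewrite deg_in; last exact: (arc1_nodes x).1.
rewrite deg_in; last exact: (arcN_nodes x).1.
case: (eqVneq x lj) => [E|Hxl].
  rewrite (eq_bigl (pred1 g)); last first.
    move=> c; change (arc N1 c x = (c == g)); rewrite (a1_in _ Hx) E eqxx andbT.
    case Hc: (arc N c lj) => //=; by rewrite (par_lj Hc) eqxx.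
  by rewrite big_pred1_eq E (big_pred1 p) // => c; apply/idP/eqP => [/par_lj|->].
apply: eq_bigl => c; rewrite a1_in // (negPf Hxl) andbF orbF.
case Hc: (arc N c x) => //=; apply/eqP => E; rewrite E in Hc.
case: (ch_p Hc) => E2; move: Hx; rewrite n1E E2 ?eqxx ?andbF //.
by rewrite E2 eqxx in Hxl.
Qed.

Lemma outdeg1 x : x \in nodes N1 -> outdeg N1 x = outdeg N x.
Proof.
move=> Hx; rewrite deg_out; last exact: (arc1_nodes x).2.
rewrite deg_out; last exact: (arcN_nodes x).2.
case: (eqVneq x g) => [E|Hxg].
  subst x; apply/esym; apply: (@sum_swap1 _ _ _ _ p lj) => //.
  - by rewrite (a1_out _ Hx) !eqxx /= andbF (negPf plj).
  - by rewrite (a1_out _ Hx) !eqxx /= orbT.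
  - by apply/negP => /par_lj E; move: gp; rewrite E eqxx.
  - by move=> c Hcp Hcl; rewrite (a1_out _ Hx) Hcp (negPf Hcl) andbT andbF orbF.
apply: eq_bigl => c; rewrite a1_out // (negPf Hxg) orbF.
case Hc: (arc N x c) => //=; apply/eqP => E; rewrite E in Hc.
by rewrite (par_p Hc) eqxx in Hxg.
Qed.

Lemma types1 x : x \in nodes N1 ->
  [/\ is_root N1 x = is_root N x, is_leaf N1 x = is_leaf N x,
      is_tree N1 x = is_tree N x & is_ret N1 x = is_ret N x].
Proof.
move=> Hx; have HxN := n1N Hx.
by rewrite /is_root /is_leaf /is_tree /is_ret indeg1 // outdeg1 // Hx HxN.
Qed.

Lemma Inv1 : Inv n N1.
Proof.
case: HN => _ _ Hc Hl Hu; split.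
- exact: arc1N.
- exact: acyc1.
- move=> x Hx; case: (types1 Hx) => -> -> -> ->; exact: Hc (n1N Hx).
- move=> x Hx; have Hx1 : x \in nodes N1 by case/andP: Hx => /andP[].
  by case: (types1 Hx1) => _ E _ _; apply: Hl; rewrite -E.
- move=> x y Hx Hy.
  have Hx1 : x \in nodes N1 by case/andP: Hx => /andP[].
  have Hy1 : y \in nodes N1 by case/andP: Hy => /andP[].
  case: (types1 Hx1) => _ E _ _; case: (types1 Hy1) => _ E' _ _.
  by apply: Hu; rewrite -?E -?E'.
Qed.

Lemma npaths1 w x : w \in nodes N1 -> x \in nodes N1 -> npaths N1 w x = npaths N w x.
Proof.
move=> Hw Hx.
apply: (@rec_uniq _ N1 acyc1 (nodes N1) (fun w => (w == x) : nat) (npaths N1 ^~ x) (npaths N ^~ x)) => //.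
- by move=> a b _ /arc1N /andP[].
- by move=> y _; apply: npaths_rec; apply: acyc1.
move=> y Hy; rewrite (nrec HN); congr addn.
case: (eqVneq y g) => [E|Hyg].
  subst y; apply: (@sum_swap1 _ _ _ _ p lj) => //.
  - by rewrite (a1_out _ Hy) !eqxx /= andbF (negPf plj).
  - by rewrite (a1_out _ Hy) !eqxx /= orbT.
  - by apply/negP => /par_lj E; move: gp; rewrite E eqxx.
  - rewrite (nrec HN p) (sum_children HN _ ptree Apl Apj Hij) (npaths_leaf HN _ Hli).
    have Hxl : x != li by move: Hx; rewrite n1E => /and3P[].
    have Hxp : x != p by move: Hx; rewrite n1E => /and3P[].
    by rewrite (eq_sym p) (negPf Hxp) (eq_sym li) (negPf Hxl).
  - by move=> c Hcp Hcl; rewrite (a1_out _ Hy) Hcp (negPf Hcl) andbT andbF orbF.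
apply: eq_bigl => c; rewrite (a1_out _ Hy) (negPf Hyg) andFb orbF.
case Hc: (arc N y c) => //=; apply/esym/eqP => E; rewrite E in Hc.
by rewrite (par_p Hc) eqxx in Hyg.
Qed.

Lemma p_not_leaf : is_leaf N p = false.
Proof. by apply/negP => H; move: (leaf_not_tree H); rewrite ptree. Qed.

Lemma mu1E w k : w \in nodes N1 ->
  mu N1 n w k = if val k == lab N li then 0 else mu N n w k.
Proof.
move=> Hw; rewrite /mu !ffunE /=.
case: (eqVneq (val k) (lab N li)) => [Ek|Nk].
  rewrite Ek eqn0Ngt (lab_pos HN Hli) /=.
  apply: big_pred0 => h; apply/negP => /andP[Hh1 /andP[Hl1 /eqP Hlab]].
  case: (types1 Hh1) => _ E _ _; rewrite E in Hl1.
  have Eh : h = li by case: HN => _ _ _ _ Hu; apply: Hu.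
  by move: Hh1; rewrite n1E Eh eqxx andbF.
case: (val k == 0).
  apply: eq_big => h.
    case Hh1: (h \in nodes N1).
      by case: (types1 Hh1) => _ _ _ ->; rewrite (n1N Hh1).
    move: Hh1; rewrite n1E; case: (eqVneq h p) => [->|Hhp] /=.
      by rewrite (negPf (tree_not_ret ptree)) andbF.
    case: (eqVneq h li) => [->|Hhl] /=; first by rewrite (negPf (leaf_not_ret Hli)) andbF.
    by move/negbT => /negPf ->.
  by move=> /andP[Hh _]; apply: npaths1.
apply: eq_big => h.
  case Hh1: (h \in nodes N1).
    by case: (types1 Hh1) => _ -> _ _; rewrite (n1N Hh1).
  move: Hh1; rewrite n1E; case: (eqVneq h p) => [->|Hhp] /=.
    by rewrite p_not_leaf andbF.
  case: (eqVneq h li) => [->|Hhl] /=.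
    by move=> _; rewrite (eq_sym (lab N li)) (negPf Nk) !andbF.
  by move=> ->.
by move=> /andP[Hh _]; apply: npaths1.
Qed.

Lemma VT_nodes (u : V) : u \in VT N -> u \in nodes N.
Proof. by rewrite inE => /orP[] /andP[] /andP[]. Qed.

Lemma VT1 u : u \in VT N -> u \in nodes N1 -> u \in VT N1.
Proof. by move=> Hu Hu1; move: Hu; rewrite !inE; case: (types1 Hu1) => _ -> -> _. Qed.

Lemma nrrec_li v : npaths N v li = (v == li) + npaths N v p.
Proof. by rewrite (nrrec HN) (sum_parent_leaf HN _ Hli Apl). Qed.
Lemma nrrec_lj v : npaths N v lj = (v == lj) + npaths N v p.
Proof. by rewrite (nrrec HN) (sum_parent_leaf HN _ Hlj Apj). Qed.

Lemma np_p x : npaths N p x = (p == x) + ((li == x) + (lj == x)).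
Proof.
by rewrite (nrec HN) (sum_children HN _ ptree Apl Apj Hij) !(npaths_leaf HN).
Qed.

Lemma key_li v : v \in VT N -> mu N n v = mu N n li -> v = li.
Proof.
move=> Hv E; apply/eqP; apply/negPn/negP => Hvl.
have H1 : npaths N v li = 1.
  by rewrite -(mu_leaf HN v Hli) E (mu_leaf HN li Hli) (npaths_leaf HN _ Hli) eqxx.
have H2 : 0 < npaths N v p by move: H1; rewrite nrrec_li (negPf Hvl) /= add0n => ->.
have H3 : 0 < npaths N v lj.
  rewrite (pos_connect HN); apply: connect_trans (connect1 Apj); by rewrite -(pos_connect HN).
move: H3; rewrite -(mu_leaf HN v Hlj) E (mu_leaf HN li Hlj) (npaths_leaf HN _ Hli).
by rewrite (negPf Hij).
Qed.

Lemma key_p v : v \in VT N -> mu N n v = mu N n p -> v = p.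
Proof.
move=> Hv E; apply/eqP; apply/negPn/negP => Hvp.
have Hvl : v != li.
  apply/eqP => Ev; move: E; rewrite Ev => /ffunP /(_ (inord (lab N lj))).
  by rewrite !(mu_leaf HN _ Hlj) (npaths_leaf HN _ Hli) np_p (negPf Hij) eqxx (negPf plj) addn1.
have H1 : npaths N v li = 1 by rewrite -(mu_leaf HN v Hli) E (mu_leaf HN p Hli) np_p eqxx (negPf pli) (eq_sym lj) (negPf Hij).
have H2 : npaths N v p = 1 by move: H1; rewrite nrrec_li (negPf Hvl).
move: Hv; rewrite inE => /orP[Hvleaf|Hvt].
  by move: H2; rewrite (npaths_leaf HN _ Hvleaf) (negPf Hvp).
have [a [b [Hab Ha Hb]]] := tree_has2 HN Hvt.
move: H2; rewrite (nrec HN) (negPf Hvp) (sum_children HN _ Hvt Ha Hb Hab) /= => H2.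
have [c [Hvc Hc0]] : exists c, arc N v c /\ npaths N c p = 0.
  case Ea: (npaths N a p) => [|k]; first by exists a.
  exists b; split => //; move: H2; rewrite Ea add0n addSn => -[] /eqP.
  by rewrite addn_eq0 => /andP[_ /eqP].
have cN : c \in nodes N by case: (arcN HN Hvc).
have [l [Hl Hcl]] := reach_leaf HN cN.
have Hcli : c != li by apply/eqP => Ec; rewrite Ec in Hvc; move: Hvp; rewrite (par_li Hvc) eqxx.
have Hclj : c != lj by apply/eqP => Ec; rewrite Ec in Hvc; move: Hvp; rewrite (par_lj Hvc) eqxx.
have Hlli : l != li.
  apply/eqP => El; rewrite El -(pos_connect HN) nrrec_li (negPf Hcli) Hc0 in Hcl; by [].
have Hllj : l != lj.
  apply/eqP => El; rewrite El -(pos_connect HN) nrrec_lj (negPf Hclj) Hc0 in Hcl; by [].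
have Hvl' : 0 < npaths N v l.
  by rewrite (pos_connect HN); apply: connect_trans Hcl; apply: connect1.
move: Hvl'; rewrite -(mu_leaf HN v Hl) E (mu_leaf HN p Hl) np_p.
have Hpl : p != l by apply/eqP => Epl; move: (leaf_not_tree Hl); rewrite -Epl ptree.
by rewrite (negPf Hpl) eq_sym (negPf Hlli) eq_sym (negPf Hllj).
Qed.

Lemma cherry_inj :
  (forall u v, u \in VT N1 -> v \in VT N1 -> mu N1 n u = mu N1 n v -> u = v) ->
  forall u v, u \in VT N -> v \in VT N -> mu N n u = mu N n v -> u = v.
Proof.
move=> IH u v Hu Hv E.
case: (eqVneq u li) => [Eu|Hul]; first by rewrite Eu; apply/esym/key_li => //; rewrite -Eu.
case: (eqVneq u p) => [Eu|Hup]; first by rewrite Eu; apply/esym/key_p => //; rewrite -Eu.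
case: (eqVneq v li) => [Ev|Hvl]; first by rewrite Ev; apply/key_li => //; rewrite -Ev.
case: (eqVneq v p) => [Ev|Hvp]; first by rewrite Ev; apply/key_p => //; rewrite -Ev.
have Hu1 : u \in nodes N1 by rewrite n1E Hul Hup (VT_nodes Hu).
have Hv1 : v \in nodes N1 by rewrite n1E Hvl Hvp (VT_nodes Hv).
apply: IH; rewrite ?VT1 //.
by apply/ffunP => k; rewrite !mu1E // E.
Qed.

End Cherry.

End Ch.

Module RC.

Section RCherry.
Variables (n : nat) (V : finType) (N : network V) (li lj pi pj q g : V).
Hypotheses (HN : Inv n N) (Hli : is_leaf N li) (Hlj : is_leaf N lj) (Hij : li != lj)
  (Api : arc N pi li) (Apj : arc N pj lj) (Hret : is_ret N pi) (Htree : is_tree N pj)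
  (Ajp : arc N pj pi) (Aqp : arc N q pi) (Hqj : q != pj) (Agj : arc N g pj).
Local Notation N1 := (del_arc_nodes N pi pj
   (fun x y => ((x == q) && (y == li)) || ((x == g) && (y == lj)))).

Lemma noli y : ~~ arc N li y. Proof. have := leaf_nochild HN y Hli. done. Qed.
Lemma nolj y : ~~ arc N lj y. Proof. have := leaf_nochild HN y Hlj. done. Qed.
Lemma pi_lj : pi != lj.
Proof. by apply/eqP => E; move: (nolj li); rewrite -E Api. Qed.
Lemma pi_li : pi != li.
Proof. by apply/eqP => E; move: (noli li); rewrite -{1}E Api. Qed.
Lemma pj_lj : pj != lj.
Proof. by apply/eqP => E; move: (nolj lj); rewrite -{1}E Apj. Qed.
Lemma pj_li : pj != li.
Proof. by apply/eqP => E; move: (noli lj); rewrite -E Apj. Qed.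
Lemma pi_pj : pi != pj.
Proof. by apply/eqP => E; move: (acycN HN Ajp); rewrite E connect0. Qed.
Lemma q_pi : q != pi.
Proof. by apply/eqP => E; move: (acycN HN Aqp); rewrite E connect0. Qed.
Lemma q_li : q != li.
Proof. by apply/eqP => E; move: (noli pi); rewrite -E Aqp. Qed.
Lemma q_lj : q != lj.
Proof. by apply/eqP => E; move: (nolj pi); rewrite -E Aqp. Qed.
Lemma g_pj : g != pj.
Proof. by apply/eqP => E; move: (acycN HN Agj); rewrite E connect0. Qed.
Lemma g_pi : g != pi.
Proof. by apply/eqP => E; move: (acycN HN Agj); rewrite E connect1. Qed.
Lemma g_li : g != li.
Proof. by apply/eqP => E; move: (noli pj); rewrite -E Agj. Qed.
Lemma g_lj : g != lj.
Proof. by apply/eqP => E; move: (nolj pj); rewrite -E Agj. Qed.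

Lemma par_li y : arc N y li -> y = pi. Proof. by move=> H; have := leaf_parent HN Hli Api H. Qed.
Lemma par_lj y : arc N y lj -> y = pj. Proof. by move=> H; have := leaf_parent HN Hlj Apj H. Qed.
Lemma par_pj y : arc N y pj -> y = g. Proof. by move=> H; have := tree_parent HN Htree Agj H. Qed.
Lemma par_pi y : arc N y pi -> y = q \/ y = pj.
Proof. by move=> H; have := ret_parent HN Hret Aqp Ajp Hqj H. Qed.
Lemma ch_pi c : arc N pi c -> c = li. Proof. by move=> H; have := ret_child HN Hret Api H. Qed.
Lemma ch_pj c : arc N pj c -> c = pi \/ c = lj.
Proof. by move=> H; have := tree_child HN Htree Ajp Apj pi_lj H. Qed.

Lemma liN : li \in nodes N. Proof. by case: (arcN HN Api). Qed.
Lemma ljN : lj \in nodes N. Proof. by case: (arcN HN Apj). Qed.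
Lemma qN : q \in nodes N. Proof. by case: (arcN HN Aqp). Qed.
Lemma gN : g \in nodes N. Proof. by case: (arcN HN Agj). Qed.

Lemma n1E x : (x \in nodes N1) = [&& x != pj, x != pi & x \in nodes N].
Proof. by rewrite /= !in_setD1. Qed.

Lemma n1N x : x \in nodes N1 -> x \in nodes N.
Proof. by rewrite n1E => /and3P[]. Qed.

Lemma arc1N x y : arc N1 x y -> (x \in nodes N1) && (y \in nodes N1).
Proof.
rewrite /= => /orP[/andP[Hxy /and4P[H1 H2 H3 H4]]|/orP[]/andP[/eqP -> /eqP ->]].
- by case: (arcN HN Hxy) => Hx Hy; rewrite !n1E H1 H2 H3 H4 Hx Hy.
- by rewrite !n1E Hqj q_pi qN (eq_sym li) pj_li (eq_sym li) pi_li liN.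
- by rewrite !n1E g_pj g_pi gN (eq_sym lj) pj_lj (eq_sym lj) pi_lj ljN.
Qed.

Lemma acyc1 x y : arc N1 x y -> ~~ connect (arc N1) y x.
Proof.
apply: acyc_sub; first exact: acycN HN.
move=> a b; rewrite /= => /orP[/andP[Hab _]|/orP[]/andP[/eqP -> /eqP ->]].
- by exists b; split => //; apply: connect0.
- by exists pi; split => //; apply: connect1.
- by exists pj; split => //; apply: connect1.
Qed.

Definition core x c := arc N x c && (c != pi) && (c != pj).

Lemma a1_out x c : x \in nodes N1 ->
  arc N1 x c = [|| core x c, (x == q) && (c == li) | (x == g) && (c == lj)].
Proof.
rewrite n1E => /and3P[Hxj Hxi Hx]; rewrite /core /= Hxj Hxi /=.
by case: (arc N x c) => //=; case: (c != pi); case: (c != pj).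
Qed.

Lemma a1_in x c : x \in nodes N1 ->
  arc N1 c x = [|| arc N c x && (c != pi) && (c != pj), (c == q) && (x == li) | (c == g) && (x == lj)].
Proof.
rewrite n1E => /and3P[Hxj Hxi Hx] /=; rewrite Hxj Hxi /= !andbT.
by case: (eqVneq c pi) => [->|Hci] /=; rewrite ?andbF ?andFb ?andbT.
Qed.

Lemma arc_x_pi x : x \in nodes N1 -> arc N x pi = (x == q).
Proof.
rewrite n1E => /and3P[Hxj _ _]; apply/idP/eqP => [H|->//].
by case: (par_pi H) => // E; rewrite E eqxx in Hxj.
Qed.

Lemma arc_x_pj x : arc N x pj = (x == g).
Proof. by apply/idP/eqP => [/par_pj|->]. Qed.

Lemma core_li x : x \in nodes N1 -> core x li = false.
Proof.
rewrite n1E => /and3P[_ Hxi _]; rewrite /core.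
case H: (arc N x li) => //; by rewrite (par_li H) eqxx in Hxi.
Qed.

Lemma core_lj x : x \in nodes N1 -> core x lj = false.
Proof.
rewrite n1E => /and3P[Hxj _ _]; rewrite /core.
case H: (arc N x lj) => //; by rewrite (par_lj H) eqxx in Hxj.
Qed.

Lemma out_sumN x (F : V -> nat) : x \in nodes N1 ->
  \sum_(c | arc N x c) F c = \sum_(c | core x c) F c + (x == q) * F pi + (x == g) * F pj.
Proof. by move=> Hx; rewrite (sum_split _ _ pi_pj) arc_x_pi // arc_x_pj. Qed.

Lemma out_sum1 x (F : V -> nat) : x \in nodes N1 ->
  \sum_(c | arc N1 x c) F c = \sum_(c | core x c) F c + (x == q) * F li + (x == g) * F lj.
Proof.
move=> Hx; rewrite (sum_split _ _ Hij) !a1_out // core_li // core_lj // !eqxx.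
rewrite (eq_sym lj li) (negPf Hij) !andbF !andbT /= !orbF.
congr (_ + _ + _); apply: eq_bigl => c /=.
have [Hxj Hxi] : x != pj /\ x != pi by move: Hx; rewrite n1E => /and3P[].
rewrite Hxj Hxi.
case: (eqVneq c li) => [->|Hcl]; first by rewrite andbF core_li.
case: (eqVneq c lj) => [->|Hcj]; first by rewrite /= ?andbF core_lj.
rewrite /core !andbF /= ?orbF; by case: (arc N x c); case: (c != pi); case: (c != pj).
Qed.

Lemma arc1_nodes x : (forall y, arc N1 y x -> y \in nodes N1) /\ (forall y, arc N1 x y -> y \in nodes N1).
Proof. by split => y /arc1N /andP[]. Qed.

Lemma arcN_nodes x : (forall y, arc N y x -> y \in nodes N) /\ (forall y, arc N x y -> y \in nodes N).
Proof. by split => y /(arcN HN) []. Qed.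

Lemma outdeg1 x : x \in nodes N1 -> outdeg N1 x = outdeg N x.
Proof.
move=> Hx; rewrite deg_out; last exact: (arc1_nodes x).2.
rewrite deg_out; last exact: (arcN_nodes x).2.
by rewrite out_sum1 // out_sumN.
Qed.

Lemma indeg1 x : x \in nodes N1 -> indeg N1 x = indeg N x.
Proof.
move=> Hx; rewrite deg_in; last exact: (arc1_nodes x).1.
rewrite deg_in; last exact: (arcN_nodes x).1.
case: (eqVneq x li) => [E|Hxl].
  subst x; rewrite (eq_bigl (pred1 q)); last first.
    move=> c; change (arc N1 c li = (c == q)); rewrite (a1_in _ Hx) eqxx (negPf Hij) !andbF orbF andbT.
    case Hc: (arc N c li) => //=; by rewrite (par_li Hc) eqxx.
  by rewrite big_pred1_eq (big_pred1 pi) // => c; apply/idP/eqP => [/par_li|->].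
case: (eqVneq x lj) => [E|Hxj].
  subst x; rewrite (eq_bigl (pred1 g)); last first.
    move=> c; change (arc N1 c lj = (c == g)); rewrite (a1_in _ Hx) eqxx (eq_sym lj li) (negPf Hij) !andbF andbT /=.
    case Hc: (arc N c lj) => //=; by rewrite (par_lj Hc) eqxx andbF.
  by rewrite big_pred1_eq (big_pred1 pj) // => c; apply/idP/eqP => [/par_lj|->].
apply: eq_bigl => c; rewrite (a1_in _ Hx) (negPf Hxl) (negPf Hxj) !andbF !orbF.
case Hc: (arc N c x) => //=.
have Hci : c != pi by apply/eqP => E; rewrite E in Hc; rewrite (ch_pi Hc) eqxx in Hxl.
have Hcj : c != pj.
  apply/eqP => E; rewrite E in Hc; case: (ch_pj Hc) => E2; last by rewrite E2 eqxx in Hxj.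
  by move: Hx; rewrite n1E E2 eqxx andbF.
by rewrite Hci Hcj.
Qed.

Lemma types1 x : x \in nodes N1 ->
  [/\ is_root N1 x = is_root N x, is_leaf N1 x = is_leaf N x,
      is_tree N1 x = is_tree N x & is_ret N1 x = is_ret N x].
Proof.
move=> Hx; have HxN := n1N Hx.
by rewrite /is_root /is_leaf /is_tree /is_ret indeg1 // outdeg1 // Hx HxN.
Qed.

Lemma Inv1 : Inv n N1.
Proof.
case: HN => _ _ Hc Hl Hu; split.
- exact: arc1N.
- exact: acyc1.
- move=> x Hx; case: (types1 Hx) => -> -> -> ->; exact: Hc (n1N Hx).
- move=> x Hx; have Hx1 : x \in nodes N1 by case/andP: Hx => /andP[].
  by case: (types1 Hx1) => _ E _ _; apply: Hl; rewrite -E.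
- move=> x y Hx Hy.
  have Hx1 : x \in nodes N1 by case/andP: Hx => /andP[].
  have Hy1 : y \in nodes N1 by case/andP: Hy => /andP[].
  case: (types1 Hx1) => _ E _ _; case: (types1 Hy1) => _ E' _ _.
  by apply: Hu; rewrite -?E -?E'.
Qed.

Lemma np_pi x : npaths N pi x = (pi == x) + (li == x).
Proof. by rewrite (nrec HN) (sum_child_ret HN _ Hret Api) (npaths_leaf HN _ Hli). Qed.

Lemma np_pj x : npaths N pj x = (pj == x) + ((pi == x) + (li == x)) + (lj == x).
Proof.
by rewrite (nrec HN) (sum_children HN _ Htree Ajp Apj pi_lj) np_pi (npaths_leaf HN _ Hlj) addnA.
Qed.

Lemma npaths1 w x : w \in nodes N1 -> x \in nodes N1 -> x != li ->
  npaths N1 w x = npaths N w x.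
Proof.
move=> Hw Hx Hxl.
apply: (@rec_uniq _ N1 acyc1 (nodes N1) (fun w => (w == x) : nat) (npaths N1 ^~ x) (npaths N ^~ x)) => //.
- by move=> a b _ /arc1N /andP[].
- by move=> y _; apply: npaths_rec; apply: acyc1.
move=> y Hy; rewrite (nrec HN) out_sum1 // out_sumN //.
have [Hxj Hxi] : x != pj /\ x != pi by move: Hx; rewrite n1E => /and3P[].
rewrite np_pj np_pi (npaths_leaf HN _ Hli) (npaths_leaf HN _ Hlj).
by rewrite !(eq_sym _ x) (negPf Hxj) (negPf Hxi) (negPf Hxl).
Qed.

Lemma npaths1_li w : w \in nodes N1 -> npaths N1 w li = (w == li) + npaths N w q.
Proof.
move=> Hw.
apply: (@rec_uniq _ N1 acyc1 (nodes N1) (fun w => (w == li) : nat) (npaths N1 ^~ li)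
   (fun w => (w == li) + npaths N w q)) => //.
- by move=> a b _ /arc1N /andP[].
- by move=> y _; apply: npaths_rec; apply: acyc1.
move=> y Hy; congr addn; rewrite big_split sum_eqb' (a1_out _ Hy) core_li // eqxx andbT.
rewrite (negPf Hij) andbF orbF /=.
rewrite out_sum1 // (nrec HN) out_sumN //.
rewrite np_pj np_pi !(npaths_leaf HN _ Hli) !(npaths_leaf HN _ Hlj).
by rewrite !(eq_sym _ q) (negPf Hqj) (negPf q_pi) (negPf q_li) (negPf q_lj) !muln0.
Qed.

Lemma liN1 : li \in nodes N1. Proof. by rewrite n1E (eq_sym li) pj_li (eq_sym li) pi_li liN. Qed.
Lemma ljN1 : lj \in nodes N1. Proof. by rewrite n1E (eq_sym lj) pj_lj (eq_sym lj) pi_lj ljN. Qed.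
Lemma piN : pi \in nodes N. Proof. by case: (arcN HN Api). Qed.

Lemma mu1_0 w : w \in nodes N1 -> mu N1 n w ord0 + npaths N w pi = mu N n w ord0.
Proof.
move=> Hw; rewrite !mu_ret [in RHS](bigD1 pi) /=; last by rewrite piN Hret.
rewrite addnC; congr addn; apply: eq_big => h.
  case Hh1: (h \in nodes N1).
    have Hhi : h != pi by move: Hh1; rewrite n1E => /and3P[].
    by case: (types1 Hh1) => _ _ _ ->; rewrite (n1N Hh1) Hhi andbT.
  move: Hh1; rewrite n1E; case: (eqVneq h pj) => [->|Hhj] /=.
    by rewrite (negPf (tree_not_ret Htree)) andbF.
  case: (eqVneq h pi) => [->|Hhi] /=; first by rewrite andbF.
  by move=> ->.
move=> /andP[Hh1 Hr]; apply: npaths1 => //.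
apply/eqP => E; rewrite E in Hr; case: (types1 liN1) => _ _ _ E2; rewrite E2 in Hr.
by move: (leaf_not_ret Hli); rewrite Hr.
Qed.

Lemma Hli1 : is_leaf N1 li. Proof. by case: (types1 liN1) => _ -> _ _. Qed.

Lemma mu1_li w : w \in nodes N1 -> mu N1 n w (inord (lab N li)) = (w == li) + npaths N w q.
Proof.
move=> Hw; have := mu_leaf Inv1 w Hli1; rewrite /= => ->; exact: npaths1_li.
Qed.

Lemma pj_not_leaf : is_leaf N pj = false.
Proof. by apply/negP => H; move: (leaf_not_tree H); rewrite Htree. Qed.
Lemma pi_not_leaf : is_leaf N pi = false.
Proof. by apply/negP => H; move: (leaf_not_ret H); rewrite Hret. Qed.

Lemma mu1_other w k : w \in nodes N1 -> val k != 0 -> val k != lab N li ->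
  mu N1 n w k = mu N n w k.
Proof.
move=> Hw Hk0 Nk; rewrite /mu !ffunE /= (negPf Hk0).
apply: eq_big => h.
  case Hh1: (h \in nodes N1).
    by case: (types1 Hh1) => _ -> _ _; rewrite (n1N Hh1).
  move: Hh1; rewrite n1E; case: (eqVneq h pj) => [->|Hhj] /=.
    by rewrite pj_not_leaf andbF.
  case: (eqVneq h pi) => [->|Hhi] /=.
    by rewrite pi_not_leaf andbF.
  by move=> ->.
move=> /andP[Hh1 /andP[Hl /eqP Hlab]]; apply: npaths1 => //.
by apply/eqP => E; rewrite E in Hlab; rewrite Hlab eqxx in Nk.
Qed.
Lemma VT_nodes (u : V) : u \in VT N -> u \in nodes N.
Proof. by rewrite inE => /orP[] /andP[] /andP[]. Qed.

Lemma VT1 u : u \in VT N -> u \in nodes N1 -> u \in VT N1.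
Proof. by move=> Hu Hu1; move: Hu; rewrite !inE; case: (types1 Hu1) => _ -> -> _. Qed.

Lemma VT_not_pi u : u \in VT N -> u != pi.
Proof.
rewrite inE => /orP[H|H]; apply/eqP => E; rewrite E in H.
  by rewrite pi_not_leaf in H.
by move: (tree_not_ret H); rewrite Hret.
Qed.

Lemma nrrec_li v : npaths N v li = (v == li) + npaths N v pi.
Proof. by rewrite (nrrec HN) (sum_parent_leaf HN _ Hli Api). Qed.
Lemma nrrec_lj v : npaths N v lj = (v == lj) + npaths N v pj.
Proof. by rewrite (nrrec HN) (sum_parent_leaf HN _ Hlj Apj). Qed.
Lemma nrrec_pi v : v != pi -> npaths N v pi = npaths N v q + npaths N v pj.
Proof. by move=> Hv; rewrite (nrrec HN) (negPf Hv) (sum_parents_ret HN _ Hret Aqp Ajp Hqj). Qed.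

Lemma mu0_ge w : npaths N w pi <= mu N n w ord0.
Proof. by rewrite mu_ret (bigD1 pi) /= ?piN ?Hret // leq_addr. Qed.

Lemma mu_li_0 : mu N n li ord0 = 0.
Proof.
rewrite mu_ret; apply: big1 => h /andP[_ Hh]; rewrite (npaths_leaf HN _ Hli).
by case: eqVneq => // E; rewrite -E in Hh; move: (leaf_not_ret Hli); rewrite Hh.
Qed.

Lemma key_li v : v \in VT N -> mu N n v = mu N n li -> v = li.
Proof.
move=> Hv E; apply/eqP; apply/negPn/negP => Hvl.
have H1 : npaths N v li = 1.
  by rewrite -(mu_leaf HN v Hli) E (mu_leaf HN li Hli) (npaths_leaf HN _ Hli) eqxx.
have H2 : npaths N v pi = 1 by move: H1; rewrite nrrec_li (negPf Hvl).
by move: (mu0_ge v); rewrite E mu_li_0 H2.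
Qed.

Lemma key_lj v : v \in VT N -> mu N n v = mu N n lj -> v = lj.
Proof.
move=> Hv E; apply/eqP; apply/negPn/negP => Hvl.
have H1 : npaths N v lj = 1.
  by rewrite -(mu_leaf HN v Hlj) E (mu_leaf HN lj Hlj) (npaths_leaf HN _ Hlj) eqxx.
have H2 : 0 < npaths N v pj by move: H1; rewrite nrrec_lj (negPf Hvl) /= add0n => ->.
have H3 : 0 < npaths N v li.
  rewrite (pos_connect HN); apply: (connect_trans _ (connect1 Api)).
  apply: (connect_trans _ (connect1 Ajp)); by rewrite -(pos_connect HN).
move: H3; rewrite -(mu_leaf HN v Hli) E (mu_leaf HN lj Hli) (npaths_leaf HN _ Hlj).
by rewrite eq_sym (negPf Hij).
Qed.

Lemma key_pj v : v \in VT N -> mu N n v = mu N n pj -> v = pj.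
Proof.
move=> Hv E; apply/eqP; apply/negPn/negP => Hvp.
have Ej : mu N n v (inord (lab N lj)) = 1.
  by rewrite E (mu_leaf HN _ Hlj) np_pj (negPf pj_lj) (negPf pi_lj) (negPf Hij) eqxx.
have Ei : mu N n v (inord (lab N li)) = 1.
  by rewrite E (mu_leaf HN _ Hli) np_pj (negPf pj_li) (negPf pi_li) eqxx (eq_sym lj) (negPf Hij).
rewrite (mu_leaf HN _ Hlj) in Ej; rewrite (mu_leaf HN _ Hli) in Ei.
have Hvl : v != li.
  by apply/eqP => Ev; move: Ej; rewrite Ev (npaths_leaf HN _ Hli) (negPf Hij).
have Hvj : v != lj.
  by apply/eqP => Ev; move: Ei; rewrite Ev (npaths_leaf HN _ Hlj) eq_sym (negPf Hij).
have Hvi := VT_not_pi Hv.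
have H2 : npaths N v pj = 1 by move: Ej; rewrite nrrec_lj (negPf Hvj).
have Hq0 : npaths N v q = 0.
  by move: Ei; rewrite nrrec_li (negPf Hvl) /= add0n nrrec_pi // H2 addn1 => -[].
move: Hv; rewrite inE => /orP[Hvleaf|Hvt].
  by move: H2; rewrite (npaths_leaf HN _ Hvleaf) (negPf Hvp).
have [a [b [Hab Ha Hb]]] := tree_has2 HN Hvt.
move: H2; rewrite (nrec HN) (negPf Hvp) (sum_children HN _ Hvt Ha Hb Hab) /= => H2.
have [c [Hvc Hc0]] : exists c, arc N v c /\ npaths N c pj = 0.
  case Ea: (npaths N a pj) => [|k]; first by exists a.
  exists b; split => //; move: H2; rewrite Ea add0n addSn => -[] /eqP.
  by rewrite addn_eq0 => /andP[_ /eqP].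
have cN : c \in nodes N by case: (arcN HN Hvc).
have [l [Hl Hcl]] := reach_leaf HN cN.
have Hcj : c != lj by apply/eqP => Ec; rewrite Ec in Hvc; move: Hvp; rewrite (par_lj Hvc) eqxx.
have Hci : c != li by apply/eqP => Ec; rewrite Ec in Hvc; move: Hvi; rewrite (par_li Hvc) eqxx.
have Hcpi : c != pi.
  apply/eqP => Ec; rewrite Ec in Hvc; case: (par_pi Hvc) => Evq; last by rewrite Evq eqxx in Hvp.
  by move: Hq0; rewrite Evq; move: (connect0 (arc N) q); rewrite -(pos_connect HN) => /prednK <-.
have Hllj : l != lj.
  apply/eqP => El; rewrite El -(pos_connect HN) nrrec_lj (negPf Hcj) Hc0 in Hcl; by [].
have Hlli : l != li.
  apply/eqP => El; rewrite El -(pos_connect HN) nrrec_li (negPf Hci) /= add0n nrrec_pi // Hc0 addn0 in Hcl.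
  move: Hq0; have : 0 < npaths N v q.
    by rewrite (pos_connect HN); apply: (@connect_trans _ _ c v q (connect1 Hvc)); rewrite -(pos_connect HN).
  by case: (npaths N v q).
have Hvl' : 0 < npaths N v l.
  by rewrite (pos_connect HN); apply: connect_trans Hcl; apply: connect1.
move: Hvl'; rewrite -(mu_leaf HN v Hl) E (mu_leaf HN pj Hl) np_pj.
have Hpjl : pj != l by apply/eqP => Epl; move: (leaf_not_tree Hl); rewrite -Epl Htree.
have Hpil : pi != l by apply/eqP => Epl; move: (leaf_not_ret Hl); rewrite -Epl Hret.
by rewrite (negPf Hpjl) (negPf Hpil) eq_sym (negPf Hlli) eq_sym (negPf Hllj).
Qed.

Lemma mu1_eq u v : u \in nodes N1 -> v \in nodes N1 -> u != li -> v != li ->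
  u != lj -> v != lj -> mu N n u = mu N n v -> mu N1 n u = mu N1 n v.
Proof.
move=> Hu Hv Hul Hvl Huj Hvj E.
have Eli : npaths N u li = npaths N v li by rewrite -!(mu_leaf HN _ Hli) E.
have Elj : npaths N u lj = npaths N v lj by rewrite -!(mu_leaf HN _ Hlj) E.
have [Hupi Hvpi] : u != pi /\ v != pi by move: Hu Hv; rewrite !n1E => /and3P[_ ? _] /and3P[_ ? _].
move: Elj; rewrite !nrrec_lj (negPf Huj) (negPf Hvj) /= !add0n => Epj.
move: Eli; rewrite !nrrec_li (negPf Hul) (negPf Hvl) /= !add0n => Epi.
have Eq : npaths N u q = npaths N v q.
  by move: Epi; rewrite !nrrec_pi // Epj => /addIn.
apply/ffunP => k.
case: (eqVneq (val k) 0) => [Hk0|Hk0].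
  have -> : k = ord0 by apply: val_inj.
  by apply: (@addIn (npaths N u pi)); rewrite {2}Epi !mu1_0 // E.
case: (eqVneq (val k) (lab N li)) => [Hki|Hki].
  have -> : k = inord (lab N li) by apply: val_inj; rewrite /= Hki inordK // (lab_lt HN Hli).
  by rewrite !mu1_li // (negPf Hul) (negPf Hvl) Eq.
by rewrite !mu1_other // E.
Qed.

Lemma rcherry_inj :
  (forall u v, u \in VT N1 -> v \in VT N1 -> mu N1 n u = mu N1 n v -> u = v) ->
  forall u v, u \in VT N -> v \in VT N -> mu N n u = mu N n v -> u = v.
Proof.
move=> IH u v Hu Hv E.
case: (eqVneq u li) => [Eu|Hul]; first by rewrite Eu; apply/esym/key_li => //; rewrite -Eu.
case: (eqVneq u lj) => [Eu|Huj]; first by rewrite Eu; apply/esym/key_lj => //; rewrite -Eu.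
case: (eqVneq u pj) => [Eu|Hup]; first by rewrite Eu; apply/esym/key_pj => //; rewrite -Eu.
case: (eqVneq v li) => [Ev|Hvl]; first by rewrite Ev; apply/key_li => //; rewrite -Ev.
case: (eqVneq v lj) => [Ev|Hvj]; first by rewrite Ev; apply/key_lj => //; rewrite -Ev.
case: (eqVneq v pj) => [Ev|Hvp]; first by rewrite Ev; apply/key_pj => //; rewrite -Ev.
have Hu1 : u \in nodes N1 by rewrite n1E Hup (VT_not_pi Hu) (VT_nodes Hu).
have Hv1 : v \in nodes N1 by rewrite n1E Hvp (VT_not_pi Hv) (VT_nodes Hv).
apply: IH; rewrite ?VT1 //.
exact: mu1_eq.
Qed.
End RCherry.

End RC.

Lemma main_ind n (V : finType) (S : seq (nat * nat)) : forall (N N' : network V),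
  Inv n N -> reduce_seq N S N' -> is_trivial N' ->
  forall u v, u \in VT N -> v \in VT N -> mu N n u = mu N n v -> u = v.
Proof.
elim: S => [|s S IH] N N' HN /=.
  move=> -> [r [l [Hrl Hnodes Harc Honly]]].
  have key : forall u, u \in VT N -> u = l.
    move=> u; rewrite inE => Hu.
    have H1 : indeg N u = 1 by case/orP: Hu => /andP[/andP[_ /eqP]].
    have : 0 < indeg N u by rewrite H1.
    by case/card_gt0P => y; rewrite inE => /andP[_ Hyu]; case: (Honly _ _ Hyu).
  by move=> u v /key -> /key ->.
case=> N1 [Hred HS] Ht.
case: Hred => li [lj [pi [pj [[Hli Hlj Hij] [[Hlabi Hlabj Api Apj] Hcase]]]]].
case: Hcase => [[Epij [g [Agp EN1]]]|[Hret Htree Ajp [q [g [Aqp Hqj Agj EN1]]]]].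
  subst pj N1.
  have HN1 := Ch.Inv1 HN Hli Hlj Hij Api Apj Agp.
  apply: (Ch.cherry_inj HN Hli Hlj Hij Api Apj Agp).
  exact: IH HN1 HS Ht.
subst N1.
have HN1 := RC.Inv1 HN Hli Hlj Hij Api Apj Hret Htree Ajp Aqp Hqj Agj.
apply: (RC.rcherry_inj HN Hli Hlj Hij Api Apj Hret Htree Ajp Aqp Hqj Agj).
exact: IH HN1 HS Ht.
Qed.

Theorem mainTheorem8 (n : nat) (V : finType) (N : network V) :
  is_network N n -> orchard N ->
  (forall u v, u \in VT N -> v \in VT N -> mu N n u = mu N n v -> u = v) /\
  uniq [seq mu N n u | u <- enum (VT N)].
Proof.
move=> Hnet [S [N' [HS Ht]]].
have Hinj := main_ind (net_Inv Hnet) HS Ht.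
split => //.
rewrite map_inj_in_uniq ?enum_uniq // => u v; rewrite !mem_enum; exact: Hinj.
Qed.
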